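(* Let $k,n$ be positive integers with $k\leqslant n$, and let $X\subseteq [n]^k_<$ be either an order ideal of $[n]^k_<$ (with respect to the Bruhat order) or a matroid. Then every linear extension of $X$ is a shelling order.
   Context: $[n]:=\{1,\ldots,n\}$. $[n]^k_<$ denotes the set of $k$-element subsets of $[n]$, each identified with the increasing tuple $x=(x_1<\cdots<x_k)$ of its elements; $A+B:=(A\setminus B)\cup(B\setminus A)$. The Bruhat order on $[n]^k_<$ is: $x\leqslant y$ iff $x_i\leqslant y_i$ for all $i\in[k]$. An order ideal is a subset $X$ such that $y\in X$ and $x\leqslant y$ imply $x\in X$. $X\subseteq[n]^k_<$ is a matroid if for all $A,B\in X$ and $a\in A\setminus B$ there exists $b\in B\setminus A$ with $A+\{a,b\}\in X$. A linear extension of $X$ is a tuple $L=(L_1,\ldots,L_h)$ listing every element of $X$ exactly once such that $L_i<L_j$ in the Bruhat order implies $i<j$. A tuple $C=(C_1,\ldots,C_h)$ of pairwise distinct elements of $[n]^k_<$ is a shelling order if for all $i<j$ in $[h]$ there exists $z<j$ with $|C_z\cap C_j|=k-1$ and $C_i\cap C_j\subseteq C_z\cap C_j$. *)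

(* Defs.v *)
(* [n] = {1,...,n} is modelled by 'I_n = {0,...,n-1}
   (an order-preserving relabelling i |-> i+1). *)
From mathcomp Require Import all_boot.
Set Implicit Arguments. Unset Strict Implicit. Unset Printing Implicit Defensive.

Definition incr_tuple (n : nat) (x : {set 'I_n}) : seq nat :=
  sort leq [seq val i | i <- enum x].

Definition bruhat_le (n : nat) (x y : {set 'I_n}) : bool :=
  all2 leq (incr_tuple x) (incr_tuple y).

Definition bruhat_lt (n : nat) (x y : {set 'I_n}) : bool :=
  (x != y) && bruhat_le x y.

Definition ksubsets (n k : nat) (X : {set {set 'I_n}}) : Prop :=
  forall x, x \in X -> #|x| = k.

Definition order_ideal (n k : nat) (X : {set {set 'I_n}}) : Prop :=
  forall x y : {set 'I_n}, y \in X -> #|x| = k -> bruhat_le x y -> x \in X.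

Definition symdiff (n : nat) (A B : {set 'I_n}) : {set 'I_n} :=
  (A :\: B) :|: (B :\: A).

Definition is_matroid (n : nat) (X : {set {set 'I_n}}) : Prop :=
  forall A B, A \in X -> B \in X -> forall a, a \in A :\: B ->
    exists2 b, b \in B :\: A & symdiff A [set a; b] \in X.

Definition linear_extension (n : nat) (X : {set {set 'I_n}})
    (L : seq {set 'I_n}) : Prop :=
  [/\ uniq L, (forall x, x \in L = (x \in X)) &
      forall i j, i < size L -> j < size L ->
        bruhat_lt (nth set0 L i) (nth set0 L j) -> i < j].

Definition shelling_order (n k : nat) (C : seq {set 'I_n}) : Prop :=
  [/\ uniq C, (forall x, x \in C -> #|x| = k) &
      forall i j, i < j -> j < size C ->
        exists2 z, z < j &
          (#|nth set0 C z :&: nth set0 C j| = k.-1) /\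
          (nth set0 C i :&: nth set0 C j \subset nth set0 C z :&: nth set0 C j)].

(* Main.v *)
Require Import Defs.
From mathcomp Require Import all_boot.
From mathcomp Require Import zify.
From Stdlib Require Import Classical.
Set Implicit Arguments. Unset Strict Implicit. Unset Printing Implicit Defensive.

Lemma all2_cnt (s1 s2 : seq nat) : sorted ltn s1 -> sorted ltn s2 ->
  size s1 = size s2 ->
  (forall t, count (fun v => v < t) s2 <= count (fun v => v < t) s1) ->
  all2 leq s1 s2.
Proof.
elim: s1 s2 => [|a r1 IH] [|b r2] //= S1 S2 [Hs] Hc.
have A1 : all (ltn a) r1 by apply: (order_path_min ltn_trans).
have A2 : all (ltn b) r2 by apply: (order_path_min ltn_trans).
have cnt0 : forall c r t, all (ltn c) r -> t <= c.+1 -> count (fun v => v < t) r = 0.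
  move=> c r t Ha Ht; apply/eqP; rewrite -leqn0 leqNgt -has_count; apply/hasPn => v Hv.
  by move/allP: Ha => /(_ v Hv) Hcv; rewrite -leqNgt; apply: leq_trans Ht Hcv.
have ab : a <= b.
  case: (leqP a b) => // h; have := Hc b.+1; rewrite ltnSn /= (cnt0 a r1 b.+1 A1) //.
    by rewrite ltnS (leqNgt a b) h /=; lia.
  by rewrite ltnS ltnW.
rewrite ab /=; apply: IH => //.
- exact: path_sorted S1.
- exact: path_sorted S2.
move=> t; case: (leqP t b) => Ht.
  by rewrite (cnt0 b r2 t A2) // ltnW.
have := Hc t; rewrite Ht /=; case: (a < t) => /=; lia.
Qed.

Definition Pt n t : {set 'I_n} := [set i : 'I_n | i < t].
Definition cnt n (x : {set 'I_n}) t := #|x :&: Pt n t|.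

Lemma incr_sorted n (x : {set 'I_n}) : sorted ltn (incr_tuple x).
Proof.
rewrite ltn_sorted_uniq_leq /incr_tuple sort_uniq sort_sorted ?andbT.
  by rewrite map_inj_uniq ?enum_uniq //; exact: val_inj.
by move=> a b; exact: leq_total.
Qed.

Lemma incr_size n (x : {set 'I_n}) : size (incr_tuple x) = #|x|.
Proof. by rewrite /incr_tuple size_sort size_map cardE. Qed.

Lemma incr_count n (x : {set 'I_n}) t :
  count (fun v => v < t) (incr_tuple x) = cnt x t.
Proof.
have P : perm_eq (sort leq [seq val i | i <- enum x]) [seq val i | i <- enum x].
  by rewrite perm_sort.
rewrite /incr_tuple (permP P) count_map /cnt cardE.
rewrite (perm_size (enum_setI x (Pt n t))) size_filter.
by apply: eq_count => i; rewrite /= inE.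
Qed.

Lemma cnt_bruhat n (x y : {set 'I_n}) : #|x| = #|y| ->
  (forall t, cnt y t <= cnt x t) -> bruhat_le x y.
Proof.
move=> Hs Hc; apply: all2_cnt; rewrite ?incr_sorted ?incr_size //.
by move=> t; rewrite !incr_count.
Qed.

Lemma cnt_swap n (A : {set 'I_n}) x y t : x \in A -> y \notin A ->
  cnt ((A :\ x) :|: [set y]) t + (x < t) = cnt A t + (y < t).
Proof.
move=> xA yA; rewrite /cnt.
rewrite (cardsD1 y (_ :&: _)) (cardsD1 x (A :&: _)).
have xy : y != x by apply/eqP => E; rewrite E xA in yA.
have -> : (((A :\ x) :|: [set y]) :&: Pt n t) :\ y = (A :&: Pt n t) :\ x.
  apply/setP => z; rewrite !inE; case: (eqVneq z y) => [->|zy].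
    by rewrite (negbTE yA) !andbF.
  by case: (z != x); case: (z \in A).
rewrite !inE eqxx xA /=; case: (y < t); case: (x < t) => /=; lia.
Qed.

Lemma exists_low n (A B : {set 'I_n}) t : cnt B t < cnt A t ->
  exists2 a, a \in A :\: B & a < t.
Proof.
move=> H.
have : ~~ (A :&: Pt n t \subset B :&: Pt n t).
  by apply/negP => /subset_leq_card; rewrite /cnt in H; lia.
case/subsetPn => a; rewrite !inE => /andP[aA at_] /negP nB.
by exists a; rewrite ?inE ?aA ?andbT //; apply/negP => aB; apply: nB; rewrite aB.
Qed.

Lemma exists_high n (A B : {set 'I_n}) t : #|A| = #|B| -> cnt B t < cnt A t ->
  exists2 b, b \in B :\: A & t <= b.
Proof.
move=> Hs H.
have : ~~ (B :\: Pt n t \subset A :\: Pt n t).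
  apply/negP => /subset_leq_card; rewrite /cnt in H.
  have := cardsID (Pt n t) A; have := cardsID (Pt n t) B; lia.
case/subsetPn => b; rewrite !inE -leqNgt => /andP[tb bB] /negP nA.
by exists b; rewrite // !inE bB andbT; apply/negP => bA; apply: nA; rewrite tb bA.
Qed.

Lemma symdiff_swap n (A : {set 'I_n}) a b : a \in A -> b \notin A ->
  symdiff A [set a; b] = (A :\ a) :|: [set b].
Proof.
move=> aA bA; apply/setP => z; rewrite /symdiff !inE.
case: (eqVneq z a) => [->|za]; first by rewrite aA /=; case: eqP => // E; rewrite -E aA in bA.
case: (eqVneq z b) => [->|zb] /=; first by rewrite (negbTE bA).
by rewrite andbF.
Qed.

Definition good n (X : {set {set 'I_n}}) (A B : {set 'I_n}) :=
  exists b, exists2 a, [/\ b \in B :\: A, a \notin B & a < b] &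
    (B :\ b) :|: [set a] \in X.

Lemma mat_base n k (X : {set {set 'I_n}}) : ksubsets k X -> is_matroid X ->
  forall (A B : {set 'I_n}) t, A \in X -> B \in X -> cnt B t < cnt A t ->
  ~~ [exists a0, (a0 \in A :\: B) && (t <= a0)] -> good X A B.
Proof.
move=> HK HM A B t AX BX Hc Hno.
have Hs : #|A| = #|B| by rewrite (HK _ AX) (HK _ BX).
have [b bBA tb] := exists_high Hs Hc.
have [a aAB HB'] := HM B A BX AX b bBA.
move: (aAB) (bBA); rewrite !inE => /andP[aB aA] /andP[bA bB].
rewrite symdiff_swap // ?inE ?aB // in HB'.
have at_ : a < t.
  rewrite ltnNge; apply/negP => ta; move/existsP: Hno; apply; exists a.
  by rewrite aAB.
exists b; exists a => //; split => //.
exact: leq_trans at_ tb.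
Qed.

Lemma mat_lemma n k (X : {set {set 'I_n}}) : ksubsets k X -> is_matroid X ->
  forall m (A B : {set 'I_n}) t, #|A :\: B| <= m -> A \in X -> B \in X ->
  cnt B t < cnt A t -> good X A B.
Proof.
move=> HK HM; elim=> [|m IH] A B t Hm AX BX Hc;
  (case: (boolP [exists a0, (a0 \in A :\: B) && (t <= a0)]);
   last by apply: mat_base HK HM A B t AX BX Hc);
  case/existsP => a0 /andP[a0AB ta0].
  by have := cardsD1 a0 (A :\: B); rewrite a0AB; lia.
have [b bBA HA'] := HM A B AX BX a0 a0AB.
move: (a0AB) (bBA); rewrite !inE => /andP[a0B a0A] /andP[bA bB].
rewrite symdiff_swap // in HA'.
have E : ((A :\ a0) :|: [set b]) :\: B = (A :\: B) :\ a0.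
  apply/setP => z; rewrite !inE; case: (eqVneq z b) => [->|zb].
    by rewrite bB !andbF.
  by case: (z \in B); case: (z != a0); case: (z \in A).
have Hm' : #|((A :\ a0) :|: [set b]) :\: B| <= m.
  by rewrite E; have := cardsD1 a0 (A :\: B); rewrite a0AB; lia.
have Hc' : cnt B t < cnt ((A :\ a0) :|: [set b]) t.
  have := cnt_swap t a0A bA; rewrite ltnNge ta0 /=; case: (b < t) => /=; lia.
have [b' [a' [H1 H2 H3] HX]] := IH _ B t Hm' HA' BX Hc'.
exists b'; exists a' => //; split => //.
move: H1; rewrite !inE => /andP[H4 H5]; rewrite H5 andbT.
move: H4; rewrite negb_or negb_and negbK => /andP[/orP[/eqP Eb|//] _].
by move: a0B; rewrite -Eb H5.
Qed.

Lemma card_swap n (A : {set 'I_n}) x y : x \in A -> y \notin A ->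
  #|(A :\ x) :|: [set y]| = #|A|.
Proof.
move=> xA yA; rewrite setUC cardsU1 (cardsD1 x A) xA !inE.
by rewrite (negbTE yA) andbF.
Qed.

Lemma swap_le n (B : {set 'I_n}) x y : x \in B -> y \notin B -> y < x ->
  bruhat_le ((B :\ x) :|: [set y]) B.
Proof.
move=> xB yB yx; apply: cnt_bruhat; first exact: card_swap.
move=> t; have := cnt_swap t xB yB.
case: (ltnP x t) => xt; first by rewrite (ltn_trans yx xt); lia.
case: (y < t) => /=; lia.
Qed.

Lemma oi_good n k (X : {set {set 'I_n}}) : ksubsets k X -> order_ideal k X ->
  forall (A B : {set 'I_n}) t, A \in X -> B \in X ->
  cnt B t < cnt A t -> good X A B.
Proof.
move=> HK HO A B t AX BX Hc.
have Hs : #|A| = #|B| by rewrite (HK _ AX) (HK _ BX).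
have [a aAB at_] := exists_low Hc.
have [b bBA tb] := exists_high Hs Hc.
move: (aAB) (bBA); rewrite !inE => /andP[aB aA] /andP[bA bB].
have ab : a < b by exact: leq_trans at_ tb.
exists b; exists a => //.
apply: (HO _ B BX); first by rewrite card_swap // (HK _ BX).
exact: swap_le.
Qed.

Theorem corollary3p5 (n k : nat) (X : {set {set 'I_n}}) :
  0 < k -> k <= n -> ksubsets k X ->
  (order_ideal k X \/ is_matroid X) ->
  forall L : seq {set 'I_n}, linear_extension X L -> shelling_order k L.
Proof.
move=> k0 kn HK HX L [Lu Lmem Llin]; split => //.
  by move=> x; rewrite Lmem; exact: HK.
move=> i j ij jL.
have iL : i < size L by exact: ltn_trans ij jL.
set A := nth set0 L i; set B := nth set0 L j.
have AX : A \in X by rewrite -Lmem mem_nth.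
have BX : B \in X by rewrite -Lmem mem_nth.
have AB : A != B by rewrite /A /B nth_uniq // neq_ltn ij.
have Hnot : ~~ bruhat_le B A.
  apply/negP => H; have := Llin j i jL iL; rewrite /bruhat_lt H eq_sym AB.
  move=> /(_ isT); lia.
have [t Ht] : exists t, cnt B t < cnt A t.
  apply: NNPP => Hn; move/negP: Hnot; apply; apply: cnt_bruhat.
    by rewrite (HK _ AX) (HK _ BX).
  move=> t; rewrite leqNgt; apply/negP => h; apply: Hn; by exists t.
have [b [a [bBA aB ab] DX]] : good X A B.
  case: HX => HX; first exact: oi_good HK HX A B t AX BX Ht.
  exact: mat_lemma HK HX #|A :\: B| A B t (leqnn _) AX BX Ht.
move: (bBA); rewrite !inE => /andP[bA bB].
set D := (B :\ b) :|: [set a].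
have DL : D \in L by rewrite Lmem.
exists (index D L).
  apply: Llin; rewrite ?index_mem // nth_index // /bruhat_lt swap_le // andbT.
  have aD : a \in D by rewrite !inE eqxx orbT.
  by apply/eqP => E; move: aB; rewrite /B -E aD.
rewrite nth_index //; split.
  have -> : D :&: B = B :\ b.
    apply/setP => z; rewrite !inE; case: (eqVneq z a) => [->|za] /=.
      by rewrite (negbTE aB) !andbF.
    by rewrite orbF -andbA andbb.
  by have := cardsD1 b B; rewrite bB (HK _ BX) /=; lia.
apply/subsetP => z; rewrite !inE => /andP[zA zB]; rewrite zB /= andbT.
rewrite andbT.
by apply/orP; left; apply/eqP => E; rewrite -E zA in bA.
Qed.
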